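(* Let $\rho=0.4353184958$, $\tau=0.1230440086$, $\varepsilon=2\times 10^{-10}$ and $U=\{q\in\mathbb{C}:\ \mathrm{Re}\,q\in[\rho-\varepsilon,\rho+\varepsilon],\ \mathrm{Im}\,q\in[\tau-\varepsilon,\tau+\varepsilon]\}$. Let $5\leq n\leq\infty$ and let $r=(r_5,r_6,\ldots)$ (indices $5\leq j\leq n$) with each $r_j\in[0,1]$, and define $$\theta_r(q,z)=1+qz+q^3z^2+q^6z^3+q^{10}z^4+\sum_{j=5}^{n}r_jq^{j(j+1)/2}z^j.$$ Then for every $q\in U$ and every $z\in\mathbb{C}$ with $|z|=|q|^{-2}$ one has $\theta_r(q,z)\neq 0$.
   Context: Here $\rho,\tau$ are the given rational (finite decimal) numbers. *)

(* Defs.v *)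
From Stdlib Require Import Reals.
From Coquelicot Require Import Coquelicot.
Open Scope R_scope.

Definition rho : R := 4353184958 / 10000000000.
Definition tau : R := 1230440086 / 10000000000.
Definition eps : R := 2 / 10000000000.

Definition inU (q : C) : Prop :=
  rho - eps <= Re q <= rho + eps /\ tau - eps <= Im q <= tau + eps.

Fixpoint cpow (x : C) (k : nat) : C :=
  match k with O => RtoC 1 | S k' => Cmult x (cpow x k') end.

Definition term (r : nat -> R) (q z : C) (j : nat) : C :=
  Cmult (RtoC (r j)) (Cmult (cpow q (Nat.div (j * (j + 1)) 2)) (cpow z j)).

Definition theta_head (q z : C) : C :=
  Cplus (RtoC 1) (Cplus (Cmult q z) (Cplus (Cmult (cpow q 3) (cpow z 2))
    (Cplus (Cmult (cpow q 6) (cpow z 3)) (Cmult (cpow q 10) (cpow z 4))))).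

Fixpoint tail_sum (r : nat -> R) (q z : C) (n : nat) : C :=
  match n with
  | O => RtoC 0
  | S m => Cplus (tail_sum r q z m) (if Nat.leb 5 n then term r q z n else RtoC 0)
  end.

Definition theta_fin (n : nat) (r : nat -> R) (q z : C) : C :=
  Cplus (theta_head q z) (tail_sum r q z n).

(* infinite tail: coefficients of the series sum_{j>=5} r_j q^{T_j} z^j *)
Definition tail_term (r : nat -> R) (q z : C) (j : nat) : C :=
  if Nat.leb 5 j then term r q z j else RtoC 0.

(* Main.v *)
Require Import Defs.
From Stdlib Require Import Reals Lra Psatz Lia.
From Coquelicot Require Import Coquelicot.
Open Scope R_scope.

Definition Apol (t:R) : R := ((7359/2500)*t^0 + (-967/10000)*t^1 + (-20501/10000)*t^2 + (-701/10000)*t^3 + (673/10000)*t^4).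
Definition Bpol (t:R) : R := ((-1731/10000)*t^0 + (17729/5000)*t^1 + (2373/5000)*t^2 + (-2841/5000)*t^3 + (0/1)*t^4).
Definition Ppol (t:R) : R := ((293256953/100000000)*t^0 + (-3231579/125000000)*t^1 + (-49270859/50000000)*t^2 + (-58268421/125000000)*t^3 + (6256953/100000000)*t^4).
Definition Qpol (t:R) : R := ((156981579/500000000)*t^0 + (-65493047/25000000)*t^1 + (-286444737/250000000)*t^2 + (8993047/25000000)*t^3 + (33981579/500000000)*t^4).
Lemma keyP t : Ppol t ^ 2 + Qpol t ^ 2 >= /400 * (1 + t^2)^4.
Proof.
  pose proof (pow2_ge_0 (Apol t)). pose proof (pow2_ge_0 (Bpol t)).
  pose proof (pow2_ge_0 (t^0 + t^1)). pose proof (pow2_ge_0 (t^0 - t^1)).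
  pose proof (pow2_ge_0 (t^1 + t^2)). pose proof (pow2_ge_0 (t^1 - t^2)).
  pose proof (pow2_ge_0 (t^2 + t^3)). pose proof (pow2_ge_0 (t^2 - t^3)).
  pose proof (pow2_ge_0 (t^3 + t^4)). pose proof (pow2_ge_0 (t^3 - t^4)).
  pose proof (pow2_ge_0 (t^1)). pose proof (pow2_ge_0 (t^2)).
  pose proof (pow2_ge_0 (t^3)). pose proof (pow2_ge_0 (t^4)).
  unfold Apol, Bpol, Ppol, Qpol in *.
  lra.
Qed.

Definition q0 : C := (435/1000, 123/1000).
Definition Hq (t : R) : C :=
  let u := (1, -t) : C in let w := (1, t) : C in
  Cplus (Cmult q0 (cpow u 4)) (Cplus (Cmult w (cpow u 3)) (Cplus (Cmult (cpow w 2) (cpow u 2))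
   (Cplus (Cmult (Cmult q0 (cpow w 3)) u) (Cmult (cpow q0 3) (cpow w 4))))).
Lemma HqP t : fst (Hq t) = Ppol t /\ snd (Hq t) = Qpol t.
Proof.
  unfold Hq, q0, Ppol, Qpol; cbn [cpow]. unfold Cplus, Cmult, RtoC; cbn [fst snd]. split; field.
Qed.

Lemma keyH t : fst (Hq t) ^ 2 + snd (Hq t) ^ 2 >= /400 * (1 + t^2)^4.
Proof. destruct (HqP t) as [E1 E2]. rewrite E1, E2. apply keyP. Qed.

Definition G (q v : C) : C :=
  Cplus q (Cplus v (Cplus (Cmult v v) (Cplus (Cmult q (cpow v 3)) (Cmult (cpow q 3) (cpow v 4))))).

Lemma Cmod_sq z : Cmod z ^ 2 = fst z ^ 2 + snd z ^ 2.
Proof. unfold Cmod. rewrite pow2_sqrt; [ring| nra]. Qed.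

Lemma Cmod_ge_of_sq z k : 0 <= k -> k^2 <= fst z^2 + snd z^2 -> k <= Cmod z.
Proof. intros. rewrite <- Cmod_sq in H0. pose proof (Cmod_ge_0 z). nra. Qed.

Lemma Cmod_le_of_sq z k : 0 <= k -> fst z^2 + snd z^2 <= k^2 -> Cmod z <= k.
Proof. intros. rewrite <- Cmod_sq in H0. pose proof (Cmod_ge_0 z). nra. Qed.

Lemma Cmod_cpow x k : Cmod (cpow x k) = Cmod x ^ k.
Proof.
  induction k; simpl.
  - rewrite Cmod_R, Rabs_R1; reflexivity.
  - rewrite Cmod_mult, IHk; reflexivity.
Qed.

Lemma G0_bound v : Cmod v = 1 -> /20 <= Cmod (G q0 v).
Proof.
  destruct v as [c s]. intro Hv.
  assert (Hcs : c^2 + s^2 = 1).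
  { pose proof (Cmod_sq (c,s)) as E. simpl fst in E; simpl snd in E. rewrite Hv in E. lra. }
  destruct (Req_dec c (-1)) as [Hc|Hc].
  - subst c. assert (s = 0) by nra. subst s. apply Cmod_ge_of_sq; [lra|].
    unfold G, q0, cpow, Cplus, Cmult; simpl. lra.
  - assert (Hc1 : 0 < 1 + c) by nra.
    set (t := s / (1 + c)).
    assert (Hs : s = t * (1 + c)) by (unfold t; field; lra).
    assert (Ht2 : t^2 * (1 + c) = 1 - c).
    { apply Rmult_eq_reg_r with (1 + c); [|lra]. nra. }
    assert (Hvu : Cmult (c,s) (1,-t) = (1,t)).
    { unfold Cmult; simpl. f_equal; nra. }
    assert (HG : Cmult (G q0 (c,s)) (cpow (1,-t) 4) = Hq t).
    { unfold Hq; cbv zeta. rewrite <- Hvu. unfold G. cbn [cpow]. ring. }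
    pose proof (keyH t) as K.
    rewrite <- Cmod_sq, <- HG, Cmod_mult, Cmod_cpow in K.
    pose proof (Cmod_sq (1,-t)) as E. simpl fst in E; simpl snd in E.
    assert (Cmod (G q0 (c, s)) ^ 2 >= /400).
    { assert (Hp : 0 < (1 + t^2)^4) by (apply pow_lt; nra).
      replace ((Cmod (G q0 (c, s)) * Cmod (1, - t) ^ 4) ^ 2) with
        (Cmod (G q0 (c, s)) ^ 2 * (Cmod (1, - t) ^ 2)^4) in K by ring.
      rewrite E in K.
      replace ((1 ^ 2 + (- t) ^ 2)) with (1 + t^2) in K by ring.
      nra. }
    pose proof (Cmod_ge_0 (G q0 (c,s))). nra.
Qed.

Lemma Cmod_rev a b : Cmod b - Cmod (Cminus b a) <= Cmod a.
Proof.
  replace b with (Cplus a (Cminus b a)) at 1 by ring.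
  pose proof (Cmod_triangle a (Cminus b a)). lra.
Qed.

Lemma modq_bounds q : inU q -> 45/100 <= Cmod q <= 46/100.
Proof.
  destruct q as [a b]. unfold inU, rho, tau, eps; simpl. intros [[H1 H2] [H3 H4]].
  split.
  - apply Cmod_ge_of_sq; simpl; nra.
  - apply Cmod_le_of_sq; simpl; nra.
Qed.

Lemma perturb q v : inU q -> Cmod v = 1 -> Cmod (Cminus (G q v) (G q0 v)) <= /500.
Proof.
  intros HU Hv.
  assert (E : Cminus (G q v) (G q0 v) =
     Cmult (Cminus q q0) (Cplus (Cplus 1 (cpow v 3))
        (Cmult (Cplus (Cmult q q) (Cplus (Cmult q q0) (Cmult q0 q0))) (cpow v 4)))).
  { unfold G. cbn [cpow]. ring. }
  rewrite E, Cmod_mult.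
  assert (Hd : Cmod (Cminus q q0) <= / 2000).
  { destruct q as [a b]. unfold inU, q0, rho, tau, eps in *; simpl in HU.
    apply Cmod_le_of_sq; [lra|]. simpl. nra. }
  pose proof (modq_bounds q HU) as Hq.
  assert (Hq0 : Cmod q0 <= 1/2).
  { apply Cmod_le_of_sq; [lra|]. unfold q0, rho, tau; simpl. lra. }
  assert (Hs : Cmod (Cplus (Cplus 1 (cpow v 3))
        (Cmult (Cplus (Cmult q q) (Cplus (Cmult q q0) (Cmult q0 q0))) (cpow v 4))) <= 3).
  { eapply Rle_trans; [apply Cmod_triangle|].
    eapply Rle_trans; [apply Rplus_le_compat; [apply Cmod_triangle| right; reflexivity]|].
    rewrite !Cmod_mult, !Cmod_cpow, Hv, Cmod_R, Rabs_R1.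
    assert (Cmod (Cplus (Cmult q q) (Cplus (Cmult q q0) (Cmult q0 q0))) <= 1).
    { eapply Rle_trans; [apply Cmod_triangle|].
      eapply Rle_trans; [apply Rplus_le_compat; [right; reflexivity| apply Cmod_triangle]|].
      rewrite !Cmod_mult. pose proof (Cmod_ge_0 q0). nra. }
    simpl. lra. }
  pose proof (Cmod_ge_0 (Cminus q q0)). nra.
Qed.

Lemma headG q z : Cmult q (theta_head q z) = G q (Cmult (Cmult q q) z).
Proof. unfold theta_head, G. cbn [cpow]. ring. Qed.

Lemma final_contra q z T : inU q -> Cmod z = / (Cmod q ^ 2) -> Cmod T <= 41/1000 ->
  Cplus (theta_head q z) T <> RtoC 0.
Proof.
  intros HU Hz HT E.
  pose proof (modq_bounds q HU) as Hq.
  set (v := Cmult (Cmult q q) z).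
  assert (Hv : Cmod v = 1).
  { unfold v. rewrite !Cmod_mult, Hz. field. lra. }
  assert (Hh : theta_head q z = Copp T).
  { replace (theta_head q z) with (Cminus (Cplus (theta_head q z) T) T) by ring.
    rewrite E. ring. }
  pose proof (headG q z) as HG. fold v in HG. rewrite Hh in HG.
  pose proof (f_equal Cmod HG) as HC. rewrite Cmod_mult, Cmod_opp in HC.
  pose proof (G0_bound v Hv). pose proof (perturb q v HU Hv).
  pose proof (Cmod_rev (G q v) (G q0 v)).
  assert (Cmod (Cminus (G q0 v) (G q v)) = Cmod (Cminus (G q v) (G q0 v))).
  { rewrite <- Cmod_opp. f_equal. ring. }
  pose proof (Cmod_ge_0 T). nra.
Qed.

Lemma pow_le1 x k : 0 <= x <= 1 -> x ^ k <= 1.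
Proof. intros H. induction k; simpl; [lra|]. pose proof (pow_le x k ltac:(lra)). nra. Qed.

Lemma pow_dec x m n : 0 <= x <= 1 -> (m <= n)%nat -> x ^ n <= x ^ m.
Proof.
  intros H Hmn. replace n with (m + (n - m))%nat by lia. rewrite pow_add.
  pose proof (pow_le1 x (n - m) H). pose proof (pow_le x m ltac:(lra)). nra.
Qed.

Lemma term_bound r q z j : (5 <= j)%nat -> 0 <= r j <= 1 -> 0 < Cmod q <= 1 ->
  Cmod z = / (Cmod q ^ 2) -> Cmod (term r q z j) <= Cmod q ^ j.
Proof.
  intros Hj Hr Hq Hz. unfold term.
  rewrite !Cmod_mult, Cmod_R, !Cmod_cpow, Hz.
  set (x := Cmod q) in *.
  assert (HT : (3 * j <= Nat.div (j * (j + 1)) 2)%nat).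
  { apply Nat.div_le_lower_bound; [lia|]. nia. }
  pose proof (pow_dec x _ _ ltac:(lra) HT) as H1.
  assert (H2 : x ^ (3 * j) * (/ x ^ 2) ^ j = x ^ j).
  { rewrite pow_mult, <- Rpow_mult_distr. f_equal. field. lra. }
  assert (H3 : 0 <= (/ x ^ 2) ^ j) by (apply pow_le; apply Rlt_le, Rinv_0_lt_compat, pow_lt; lra).
  assert (H4 : 0 <= x ^ Nat.div (j * (j + 1)) 2) by (apply pow_le; lra).
  rewrite Rabs_pos_eq by lra.
  rewrite <- H2.
  assert (x ^ Nat.div (j * (j + 1)) 2 * (/ x ^ 2) ^ j <= x ^ (3 * j) * (/ x ^ 2) ^ j)
    by (apply Rmult_le_compat_r; auto).
  assert (0 <= x ^ Nat.div (j * (j + 1)) 2 * (/ x ^ 2) ^ j) by (apply Rmult_le_pos; auto).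
  nra.
Qed.

Lemma tail_bound r q z N x : 0 <= x < 1 ->
  (forall j, (5 <= j <= N)%nat -> Cmod (term r q z j) <= x ^ j) ->
  forall m, (m <= N)%nat ->
  Cmod (tail_sum r q z m) <= (x ^ 5 - x ^ (Nat.max (m + 1) 5)) / (1 - x).
Proof.
  intros Hx Ht m. induction m; intros Hm.
  - simpl. rewrite Cmod_R, Rabs_R0. unfold Rdiv. lra.
  - change (tail_sum r q z (S m)) with (Cplus (tail_sum r q z m) (if Nat.leb 5 (S m) then term r q z (S m) else RtoC 0)).
    destruct (Nat.leb 5 (S m)) eqn:E.
    + apply Nat.leb_le in E.
      eapply Rle_trans; [apply Cmod_triangle|].
      pose proof (IHm ltac:(lia)) as IH.
      pose proof (Ht (S m) ltac:(lia)) as HS.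
      rewrite Nat.max_l in IH by lia. rewrite Nat.max_l by lia.
      rewrite Nat.add_1_r in IH.
      rewrite Nat.add_1_r.
      apply Rle_trans with ((x ^ 5 - x ^ S m) / (1 - x) + x ^ S m); [lra|].
      apply Req_le. change (x ^ S (S m)) with (x * x ^ S m). field. lra.
    + apply Nat.leb_gt in E.
      pose proof (IHm ltac:(lia)) as IH.
      rewrite Nat.max_r in IH by lia. rewrite Nat.max_r by lia.
      eapply Rle_trans; [apply Cmod_triangle|]. rewrite Cmod_R, Rabs_R0. lra.
Qed.

Lemma geo_bound x m : 0 <= x <= 46/100 -> (x ^ 5 - x ^ m) / (1 - x) <= 4/100.
Proof.
  intros Hx. pose proof (pow_le x m ltac:(lra)).
  pose proof (pow_incr x (46/100) 5 Hx).
  apply Rle_trans with (x ^ 5 / (1 - x)).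
  { unfold Rdiv. apply Rmult_le_compat_r; [apply Rlt_le, Rinv_0_lt_compat; lra| lra]. }
  apply Rmult_le_reg_r with (1 - x); [lra|].
  unfold Rdiv. rewrite Rmult_assoc, Rinv_l by lra. simpl in *. lra.
Qed.

Lemma sum_tail r q z n : sum_n (tail_term r q z) n = tail_sum r q z n.
Proof.
  induction n.
  - rewrite sum_O. reflexivity.
  - rewrite sum_Sn, IHn. reflexivity.
Qed.

Theorem lemma4 :
  (* case 5 <= n < oo *)
  (forall (n : nat) (r : nat -> R), (5 <= n)%nat ->
     (forall j : nat, (5 <= j <= n)%nat -> 0 <= r j <= 1) ->
     forall q z : C, inU q -> Cmod z = / (Cmod q ^ 2) ->
     theta_fin n r q z <> RtoC 0) /\
  (* case n = oo: the series converges and its sum is nonzero *)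
  (forall (r : nat -> R),
     (forall j : nat, (5 <= j)%nat -> 0 <= r j <= 1) ->
     forall q z : C, inU q -> Cmod z = / (Cmod q ^ 2) ->
     exists l : C, @is_series C_AbsRing C_NormedModule (tail_term r q z) l /\
                   Cplus (theta_head q z) l <> RtoC 0).
Proof.
  split.
  - intros n r Hn Hr q z HU Hz.
    pose proof (modq_bounds q HU) as Hq.
    apply final_contra; auto.
    pose proof (tail_bound r q z n (Cmod q) ltac:(lra)) as TB.
    eapply Rle_trans; [apply TB; [|lia]|].
    + intros j Hj. apply term_bound; [lia| apply Hr; lia | lra | exact Hz].
    + pose proof (geo_bound (Cmod q) (Nat.max (n + 1) 5) ltac:(lra)). lra.
  - intros r Hr q z HU Hz.
    pose proof (modq_bounds q HU) as Hq.
    set (x := Cmod q) in *.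
    assert (Hb : forall j, Cmod (tail_term r q z j) <= x ^ j).
    { intros j. unfold tail_term. destruct (Nat.leb 5 j) eqn:E.
      - apply Nat.leb_le in E. apply term_bound; [lia| apply Hr; lia | (unfold x in *; lra) | exact Hz].
      - rewrite Cmod_R, Rabs_R0. apply pow_le. lra. }
    assert (Hex : ex_series (V := C_CompleteNormedModule) (tail_term r q z)).
    { apply (ex_series_le (V := C_CompleteNormedModule) _ (fun j => x ^ j)).
      - intros j. apply Hb.
      - exists (/ (1 - x)). apply is_series_geom. rewrite Rabs_pos_eq; lra. }
    destruct Hex as [l Hl].
    exists l. split; [exact Hl|].
    apply final_contra; auto.
    assert (Heps : 0 < 1/1000) by lra.
    pose proof (proj1 (filterlim_locally_ball_norm _ _) Hl (mkposreal _ Heps)) as Hev.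
    destruct Hev as [N HN]. specialize (HN N (Nat.le_refl N)).
    unfold ball_norm in HN. simpl in HN.
    rewrite sum_tail in HN.
    pose proof (tail_bound r q z N x ltac:(lra)) as TB.
    assert (HT : Cmod (tail_sum r q z N) <= 4/100).
    { eapply Rle_trans; [apply TB; [|lia]|].
      + intros j Hj. apply term_bound; [lia| apply Hr; lia | (unfold x in *; lra) | exact Hz].
      + apply geo_bound; lra. }
    replace l with (Cminus (tail_sum r q z N) (Cminus (tail_sum r q z N) l)) by ring.
    eapply Rle_trans; [apply Cmod_triangle|]. rewrite Cmod_opp.
    change (Cmod (Cminus (tail_sum r q z N) l) < 1/1000) in HN. lra.
Qed.
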